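(* For a monoid $S$, the following are equivalent: (i) $S$ is right artinian; (ii) there exists a generator right $S$-act that is artinian; (iii) every finitely generated right $S$-act is artinian; (iv) every finitely generated right $S$-act is finitely cogenerated.
   Context: $S$ is right artinian if $S_S$ is artinian, i.e. the set of right congruences on $S$ satisfies the descending chain condition. A right $S$-act is artinian if its congruences satisfy the descending chain condition. A generator is an $S$-act $G$ such that $S_S$ is a homomorphic image of $G$ (equivalently, every $S$-act is a homomorphic image of a coproduct of copies of $G$). An $S$-act $A$ is finitely cogenerated if whenever congruences $\rho_i$ ($i\in I$) satisfy $\bigcap_{i\in I}\rho_i=\Delta_A$, already $\bigcap_{j\in J}\rho_j=\Delta_A$ for some finite $J\subseteq I$. *)

(* Defs.v *)
From Stdlib Require Import List Arith.

Record monoid := Monoid {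
  mcar :> Type;
  mmul : mcar -> mcar -> mcar;
  mone : mcar;
  mmulA : forall x y z, mmul x (mmul y z) = mmul (mmul x y) z;
  mmul1l : forall x, mmul mone x = x;
  mmul1r : forall x, mmul x mone = x
}.

Record ract (S : monoid) := RAct {
  acar :> Type;
  act : acar -> S -> acar;
  act1 : forall a, act a (mone S) = a;
  actM : forall a s t, act (act a s) t = act a (mmul S s t)
}.
Arguments act {S} _ _ _.

Definition regular_act (S : monoid) : ract S :=
  @RAct S S (mmul S) (mmul1r S) (fun a s t => eq_sym (mmulA S a s t)).

Definition congruence {S : monoid} (A : ract S) (rho : A -> A -> Prop) : Prop :=
  (forall a, rho a a) /\
  (forall a b, rho a b -> rho b a) /\
  (forall a b c, rho a b -> rho b c -> rho a c) /\
  (forall a b s, rho a b -> rho (act A a s) (act A b s)).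

Definition artinian_act {S : monoid} (A : ract S) : Prop :=
  forall rho : nat -> A -> A -> Prop,
    (forall n, congruence A (rho n)) ->
    (forall n a b, rho (Datatypes.S n) a b -> rho n a b) ->
    exists N, forall m, N <= m -> forall a b, rho N a b -> rho m a b.

Definition right_artinian (S : monoid) : Prop := artinian_act (regular_act S).

Definition act_hom {S : monoid} (A B : ract S) (f : A -> B) : Prop :=
  forall a s, f (act A a s) = act B (f a) s.

Definition generator {S : monoid} (G : ract S) : Prop :=
  exists f : G -> regular_act S,
    act_hom G (regular_act S) f /\ (forall y, exists g, f g = y).

Definition finitely_generated {S : monoid} (A : ract S) : Prop :=
  exists X : list A, forall a, exists x s, In x X /\ a = act A x s.

(* Finitely cogenerated: whenever a family of congruences intersects to the
   diagonal, some finite subfamily already does (empty intersection = A x A). *)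
Definition finitely_cogenerated {S : monoid} (A : ract S) : Prop :=
  forall (I : Type) (rho : I -> A -> A -> Prop),
    (forall i, congruence A (rho i)) ->
    (forall a b, (forall i, rho i a b) -> a = b) ->
    exists J : list I, forall a b, (forall j, In j J -> rho j a b) -> a = b.

(* Main.v *)
Require Import Defs.
From Stdlib Require Import List Arith Lia Classical ClassicalEpsilon FunctionalExtensionality PropExtensionality ProofIrrelevance.

Lemma chain_le {T : Type} (rho : nat -> T -> T -> Prop) :
  (forall n a b, rho (Datatypes.S n) a b -> rho n a b) ->
  forall n m, n <= m -> forall a b, rho m a b -> rho n a b.
Proof. intros H n m Hnm; induction Hnm; auto. Qed.

Lemma artinian_image {M : monoid} (B A : ract M) (f : B -> A) :
  act_hom B A f -> (forall a, exists b, f b = a) -> artinian_act B -> artinian_act A.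
Proof.
  intros Hf Hs HB rho Hc Hd.
  destruct (HB (fun n x y => rho n (f x) (f y))) as [N HN].
  - intros n; destruct (Hc n) as (r & s & t & c); repeat split.
    + intros; apply r.
    + intros; now apply s.
    + intros; eapply t; eauto.
    + intros x y u H; rewrite !Hf; now apply c.
  - intros n x y; apply Hd.
  - exists N; intros m Hm a b Hab.
    destruct (Hs a) as [x <-]; destruct (Hs b) as [y <-]; now apply HN.
Qed.

Definition sum_act {M : monoid} (A B : ract M) : ract M.
Proof.
refine (@RAct M (A + B)%type (fun u s => match u with inl a => inl (act A a s) | inr b => inr (act B b s) end) _ _).
- intros [a|b]; now rewrite act1.
- intros [a|b] s t; now rewrite actM.
Defined.

Definition empty_act (M : monoid) : ract M.
Proof.
refine (@RAct M Empty_set (fun e _ => e) _ _); intros [].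
Defined.

Lemma empty_art M : artinian_act (empty_act M).
Proof. intros rho _ _. exists 0. intros m _ [] . Qed.

Lemma sum_artinian {M : monoid} (A B : ract M) :
  artinian_act A -> artinian_act B -> artinian_act (sum_act A B).
Proof.
  intros HA HB rho Hc Hd.
  assert (Hle := chain_le rho Hd).
  destruct (HA (fun n a a' => rho n (inl a) (inl a'))) as [N1 H1].
  { intros n; destruct (Hc n) as (r & s & t & c); repeat split.
    + intros; apply r.
    + intros; now apply s.
    + intros; eapply t; eauto.
    + intros x y u H; exact (c _ _ u H). }
  { intros n x y; apply Hd. }
  destruct (HB (fun n a a' => rho n (inr a) (inr a'))) as [N2 H2].
  { intros n; destruct (Hc n) as (r & s & t & c); repeat split.
    + intros; apply r.
    + intros; now apply s.
    + intros; eapply t; eauto.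
    + intros x y u H; exact (c _ _ u H). }
  { intros n x y; apply Hd. }
  set (D := fun n a => exists b, rho n (inl a) (inr b)).
  assert (HDd : forall n m, n <= m -> forall a, D m a -> D n a).
  { intros n m Hnm a [b Hb]; exists b; eapply Hle; eauto. }
  destruct (HA (fun n a a' => a = a' \/ (D n a /\ D n a'))) as [N3 H3].
  { intros n; repeat split.
    + intros; now left.
    + intros a b [->|[? ?]]; [now left | now right].
    + intros a b c [->|[? ?]] [->|[? ?]]; auto.
    + intros a b u [->|[[x Hx] [y Hy]]]; [now left|right].
      destruct (Hc n) as (_ & _ & _ & c).
      split; [exists (act B x u); exact (c _ _ u Hx)|exists (act B y u); exact (c _ _ u Hy)]. }
  { intros n a b [->|[? ?]]; [now left|right]; split; eapply HDd; eauto. }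
  set (N0 := max N1 (max N2 N3)).
  assert (HI : forall m, N0 <= m -> forall a a', rho N0 (inl a) (inl a') -> rho m (inl a) (inl a')).
  { intros m Hm a a' H. apply (H1 m ltac:(lia)). eapply Hle; [|eauto]. lia. }
  assert (HJ : forall m, N0 <= m -> forall a a', rho N0 (inr a) (inr a') -> rho m (inr a) (inr a')).
  { intros m Hm a a' H. apply (H2 m ltac:(lia)). eapply Hle; [|eauto]. lia. }
  destruct (classic (exists K, N0 <= K /\ forall a, ~ D K a)) as [[K [HK HDK]] | Hne].
  - exists K. intros m Hm [a|a] [b|b] H.
    + apply HI; [lia|]. eapply Hle; [|eauto]. lia.
    + exfalso; apply (HDK a); exists b; exact H.
    + exfalso; apply (HDK b); exists a. destruct (Hc K) as (_ & s & _ & _); now apply s.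
    + apply HJ; [lia|]. eapply Hle; [|eauto]. lia.
  - assert (Hcross : forall m, N0 <= m -> forall a b, rho N0 (inl a) (inr b) -> rho m (inl a) (inr b)).
    { intros m Hm a b H.
      assert (HDm : exists a', D m a').
      { apply NNPP; intro Hn; apply Hne; exists m; split; auto.
        intros a' Ha'; apply Hn; eauto. }
      destruct HDm as [a' Ha'].
      assert (Hs : D m a).
      { assert (Hx : a = a' \/ (D N3 a /\ D N3 a')).
        { right; split; [apply (HDd N3 N0); [lia| exists b; exact H] | apply (HDd N3 m); [lia|auto]]. }
        destruct (H3 m ltac:(lia) a a' Hx) as [->|[? ?]]; auto. }
      destruct Hs as [b' Hb'].
      destruct (Hc N0) as (_ & s0 & t0 & _).
      destruct (Hc m) as (_ & s & t & _).
      assert (Hbb : rho N0 (inr b) (inr b')).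
      { eapply t0; [apply s0; exact H|]. eapply Hle; [|eauto]. lia. }
      eapply t; [exact Hb'|]. apply s. apply HJ; auto. }
    exists N0. intros m Hm [a|a] [b|b] H.
    + apply HI; auto.
    + apply Hcross; auto.
    + destruct (Hc m) as (_ & s & _ & _). destruct (Hc N0) as (_ & s0 & _ & _).
      apply s, Hcross, s0; auto.
    + apply HJ; auto.
Qed.

Fixpoint freeF (M : monoid) (n : nat) : ract M :=
  match n with 0 => empty_act M | Datatypes.S k => sum_act (regular_act M) (freeF M k) end.

Lemma freeF_art M n : right_artinian M -> artinian_act (freeF M n).
Proof. intros H; induction n; simpl; [apply empty_art | apply sum_artinian; auto]. Qed.

Fixpoint evalF {M : monoid} (A : ract M) (X : list A) : freeF M (length X) -> A :=
  match X as X0 return freeF M (length X0) -> A with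
  | nil => fun e => Empty_set_rect (fun _ => A) e
  | x :: X' => fun u => match u with inl s => act A x s | inr v => evalF A X' v end
  end.

Lemma evalF_hom {M : monoid} (A : ract M) (X : list A) : act_hom _ A (evalF A X).
Proof.
  induction X as [|x X IH]; intros u t.
  - destruct u.
  - destruct u as [s|v]; simpl.
    + now rewrite actM.
    + apply IH.
Qed.

Lemma evalF_surj {M : monoid} (A : ract M) (X : list A) :
  forall a x s, In x X -> a = act A x s -> exists u, evalF A X u = a.
Proof.
  induction X as [|y X IH]; intros a x s Hin Ha.
  - destruct Hin.
  - destruct Hin as [->|Hin].
    + exists (inl s : freeF M (length (x :: X))). simpl. now subst.
    + destruct (IH a x s Hin Ha) as [v Hv].
      exists (inr v : freeF M (length (y :: X))). exact Hv.
Qed.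

Lemma art_fg (M : monoid) : right_artinian M ->
  forall A : ract M, finitely_generated A -> artinian_act A.
Proof.
  intros H A [X HX].
  apply (artinian_image _ A (evalF A X) (evalF_hom A X)).
  - intros a; destruct (HX a) as (x & s & Hin & Ha). eapply evalF_surj; eauto.
  - apply freeF_art; auto.
Qed.

Lemma regular_fg (M : monoid) : finitely_generated (regular_act M).
Proof.
  exists (mone M :: nil). intros a. exists (mone M), a. split; [now left|].
  simpl. now rewrite mmul1l.
Qed.

Fixpoint chainL {I : Type} (nx : list I -> I) (n : nat) : list I :=
  match n with 0 => nil | Datatypes.S k => nx (chainL nx k) :: chainL nx k end.

Lemma art_fcog {M : monoid} (A : ract M) : artinian_act A -> finitely_cogenerated A.
Proof.
  intros HA I rho Hc Hdiag.
  apply NNPP; intro Hno.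
  assert (Hnext : forall J : list I, exists i,
    ~ (forall a b, (forall j, In j J -> rho j a b) -> rho i a b)).
  { intros J. apply not_all_not_ex. intros Hall. apply Hno. exists J.
    intros a b Hab. apply Hdiag. intros i. specialize (Hall i). apply NNPP in Hall. auto. }
  set (next := fun J => proj1_sig (constructive_indefinite_description _ (Hnext J))).
  assert (Hnx : forall J, ~ (forall a b, (forall j, In j J -> rho j a b) -> rho (next J) a b)).
  { intro J. exact (proj2_sig (constructive_indefinite_description _ (Hnext J))). }
  destruct (HA (fun n a b => forall j, In j (chainL next n) -> rho j a b)) as [N HN].
  { intros n; repeat split.
    + intros a j _; destruct (Hc j) as (r & _ & _ & _); apply r.
    + intros a b H j Hj; destruct (Hc j) as (_ & s & _ & _); apply s; auto.
    + intros a b c H1 H2 j Hj; destruct (Hc j) as (_ & _ & t & _); eapply t; eauto.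
    + intros a b u H j Hj; destruct (Hc j) as (_ & _ & _ & c); apply c; auto. }
  { intros n a b H j Hj. apply H. simpl. now right. }
  apply (Hnx (chainL next N)). intros a b H.
  apply (HN (Datatypes.S N) ltac:(lia) a b H). simpl. now left.
Qed.

Definition qcar (M : monoid) (r : M -> M -> Prop) := {P : M -> Prop | exists s, P = r s}.
Definition actP (M : monoid) (r : M -> M -> Prop) (P : M -> Prop) (t : M) : M -> Prop :=
  fun x => exists s, P s /\ r (mmul M s t) x.

Lemma actP_cls M r (Hr : congruence (regular_act M) r) s t : actP M r (r s) t = r (mmul M s t).
Proof.
  destruct Hr as (rf & sy & tr & c).
  apply functional_extensionality; intros x; apply propositional_extensionality; split.
  - intros [s0 [H1 H2]]. eapply tr; [|exact H2]. apply (c _ _ t H1).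
  - intros H. exists s. split; auto.
Qed.

Lemma qact_ok M r (Hr : congruence (regular_act M) r) (u : qcar M r) t :
  exists s, actP M r (proj1_sig u) t = r s.
Proof. destruct u as [P [s ->]]; simpl; exists (mmul M s t); apply actP_cls; auto. Qed.

Lemma qeq M r (u v : qcar M r) : proj1_sig u = proj1_sig v -> u = v.
Proof. destruct u, v; simpl; intros ->; f_equal; apply proof_irrelevance. Qed.

Definition quot_act M r (Hr : congruence (regular_act M) r) : ract M.
Proof.
refine (@RAct M (qcar M r) (fun u t => exist _ _ (qact_ok M r Hr u t)) _ _).
- intros [P [s ->]]. apply qeq. simpl. rewrite actP_cls; auto. now rewrite mmul1r.
- intros [P [s ->]] t t'. apply qeq; simpl. rewrite !actP_cls; auto. now rewrite mmulA.
Defined.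

Lemma fold_max_le (J : list nat) j : In j J -> j <= fold_right max 0 J.
Proof. induction J as [|x J IHJ]; simpl; [intros []|intros [->|H]; [|specialize (IHJ H)]; lia]. Qed.

Lemma fcog_art (M : monoid) :
  (forall A : ract M, finitely_generated A -> finitely_cogenerated A) -> right_artinian M.
Proof.
  intros H rho Hc Hd.
  assert (Hle := chain_le rho Hd).
  set (r := fun a b : M => forall n, rho n a b).
  assert (Hr : congruence (regular_act M) r).
  { repeat split.
    + intros a n; destruct (Hc n) as (x & _ & _ & _); apply x.
    + intros a b h n; destruct (Hc n) as (_ & x & _ & _); apply x; auto.
    + intros a b c h1 h2 n; destruct (Hc n) as (_ & _ & x & _); eapply x; eauto.
    + intros a b s h n; destruct (Hc n) as (_ & _ & _ & x); apply x; auto. }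
  destruct Hr as (rf & sy & tr & cp) eqn:EHr.
  set (Q := quot_act M r Hr).
  set (cls := fun s : M => exist (fun P => exists s0, P = r s0) (r s) (ex_intro _ s eq_refl) : Q).
  assert (fgQ : finitely_generated Q).
  { exists (cls (mone M) :: nil). intros [P [s ->]]. exists (cls (mone M)), s.
    split; [now left|]. apply qeq. simpl. rewrite actP_cls; auto. now rewrite mmul1l. }
  set (tau := fun n (u v : Q) => forall s s', proj1_sig u s -> proj1_sig v s' -> rho n s s').
  assert (Hrn : forall n a b, r a b -> rho n a b) by (intros n a b h; apply h).
  assert (Htc : forall n, congruence Q (tau n)).
  { intros n; destruct (Hc n) as (rfn & syn & trn & cpn); repeat split.
    + intros [P [s0 ->]] s s' h1 h2; simpl in *. apply Hrn. eapply tr; [apply sy|]; eauto.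
    + intros u v h s s' h1 h2. apply syn. apply h; auto.
    + intros u v w h1 h2 s s' g1 g2. destruct v as [P [s1 ->]].
      eapply trn; [apply (h1 s s1); auto; apply rf| apply (h2 s1 s'); auto; apply rf].
    + intros u v t h s s' [s0 [g1 g2]] [s0' [g1' g2']].
      eapply trn; [apply syn, Hrn, g2|]. eapply trn; [|apply Hrn, g2'].
      apply cpn. apply h; auto. }
  assert (Hdg : forall u v : Q, (forall n, tau n u v) -> u = v).
  { intros [P [s0 ->]] [P' [s1 ->]] h. apply qeq; simpl.
    assert (r s0 s1) by (intros n; apply (h n); simpl; apply rf).
    apply functional_extensionality; intros x; apply propositional_extensionality; split;
      intros g; eapply tr; eauto. }
  destruct (H Q fgQ nat tau Htc Hdg) as [J HJ].
  exists (fold_right max 0 J). intros m Hm a b Hab.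
  assert (E : cls a = cls b).
  { apply HJ. intros j Hj s s' g1 g2; simpl in *.
    assert (Hj' := fold_max_le J j Hj).
    destruct (Hc j) as (_ & syj & trj & _).
    eapply trj; [apply syj, Hrn, g1|]. eapply trj; [|apply Hrn, g2].
    eapply Hle; eauto. }
  assert (E' : r a = r b) by exact (f_equal (@proj1_sig _ _) E).
  assert (r a b) by (rewrite E'; apply rf).
  apply H0.
Qed.

Theorem mainTheorem12 (S : monoid) :
  (right_artinian S <-> exists G : ract S, generator G /\ artinian_act G) /\
  (right_artinian S <-> forall A : ract S, finitely_generated A -> artinian_act A) /\
  (right_artinian S <-> forall A : ract S, finitely_generated A -> finitely_cogenerated A).
Proof.
  split; [|split].
  - split.
    + intros H. exists (regular_act S). split; auto.
      exists (fun x => x). split; [intros a s; reflexivity | intros y; exists y; reflexivity].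
    + intros [G [[f [Hf Hs]] HG]]. exact (artinian_image G _ f Hf Hs HG).
  - split; [apply art_fg|]. intros H; apply H, regular_fg.
  - split; [|apply fcog_art]. intros H A HA. apply art_fcog, art_fg; auto.
Qed.
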